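(* Assume $d_0\delta>2$, and let $\varepsilon_0=\frac{d_0}2-\frac1\delta>0$ and $t=\frac{d_0}{2}$. Let $G=(L\cup R,E)$ be a $(c,d,\alpha,\delta)$-bipartite expander with $L=[n]$, $C_0\subseteq\mathbb{F}_2^d$ a linear code of minimum distance $d_0$, $x\in\mathbb{F}_2^n$ and $y\in T(G,C_0)$ with $d_H(x,y)\le\alpha n$, and $F=F(x,y)$. For $q\in W$, let $P_q$ be the set of $i\in[n]$ such that $p_i=q$ at the end of $\mathsf{DeterFlip}(x,q)$. Then there exists $q\in W\setminus\{0\}$ such that $|P_q\cap F|-|P_q\setminus F|\ge\frac{\varepsilon_0\delta}{2ct^2}|F|$.
   Context: A bipartite graph is $(c,d)$-regular if left degrees are $c$ and right degrees $d$; $N(S)$ is the neighborhood of $S$. A $(c,d,\alpha,\delta)$-bipartite expander ($\alpha,\delta\in(0,1]$) is a $(c,d)$-regular bipartite graph with $|N(S)|\ge\delta c|S|$ for all $S\subseteq L$, $|S|\le\alpha|L|$. Tanner code: $L=[n]$, for each $v\in R$ a fixed ordering of $N(v)$ defines $x_{N(v)}\in\mathbb{F}_2^d$, and $T(G,C_0)=\{x:x_{N(v)}\in C_0\ \forall v\in R\}$. $F(x,y)=\{i\in[n]:x_i\ne y_i\}$; $d_H$ is Hamming distance. $\mathsf{Decode}(z)$ is the codeword of $C_0$ closest to $z\in\mathbb{F}_2^d$, ties broken lexicographically. $W=\{\frac{i}{cd_0}:i\in\mathbb{Z},0\le i\le cd_0\}$. $\mathsf{DeterFlip}(x,q)$ for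 $q\in\mathbb{R}$: set $p_1=\dots=p_n=0$; for each $v\in R$, let $w_v=\mathsf{Decode}(x_{N(v)})$; if $1\le d_H(w_v,x_{N(v)})<t$, let $i$ be the smallest element of $N(v)$ where $w_v$ and $x_{N(v)}$ differ and increase $p_i$ by $\frac{t-d_H(w_v,x_{N(v)})}{ct}$; then flip every $x_i$ with $p_i=q$ and return the result. *)

(* Defs.v *)
From mathcomp Require Import all_boot all_order all_algebra.
Set Implicit Arguments.
Unset Strict Implicit.
Unset Printing Implicit Defensive.
Import Order.TTheory GRing.Theory Num.Theory.
Local Open Scope ring_scope.

Definition word k := 'rV['F_2]_k.

Definition dH k (u v : word k) : nat := #|[set j : 'I_k | u 0 j != v 0 j]|.

Definition Fdiff n (x y : word n) : {set 'I_n} := [set i | x 0 i != y 0 i].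

(* Bipartite graph with L = [n] (as 'I_n), R = 'I_m; each right vertex v
   carries a fixed ordering of its neighbourhood, nbr v : d.-tuple 'I_n. *)
Definition Nbh n m d (nbr : 'I_m -> d.-tuple 'I_n) (S : {set 'I_n}) : {set 'I_m} :=
  [set v | has (fun i => i \in S) (nbr v)].

Definition biregular n m c d (nbr : 'I_m -> d.-tuple 'I_n) : Prop :=
  (forall v, uniq (nbr v)) /\
  (forall i : 'I_n, #|[set v | i \in nbr v]| = c).

Definition bip_expander (R : realFieldType) n m c d (alpha delta : R)
    (nbr : 'I_m -> d.-tuple 'I_n) : Prop :=
  biregular c nbr /\ 0 < alpha <= 1 /\ 0 < delta <= 1 /\
  forall S : {set 'I_n}, (#|S|%:R <= alpha * n%:R) ->
     delta * c%:R * #|S|%:R <= #|Nbh nbr S|%:R.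

(* linear code over F_2 (a subgroup of (F_2^d,+), i.e. an F_2-subspace) *)
Definition linear_code d (C0 : {set word d}) : Prop :=
  0 \in C0 /\ forall u v, u \in C0 -> v \in C0 -> u + v \in C0.

Definition min_dist d (C0 : {set word d}) (d0 : nat) : Prop :=
  (exists u v, [/\ u \in C0, v \in C0, u != v & dH u v = d0]) /\
  (forall u v, u \in C0 -> v \in C0 -> u != v -> (d0 <= dH u v)%N).

Definition loc n m d (nbr : 'I_m -> d.-tuple 'I_n) (x : word n) (v : 'I_m)
  : word d := \row_(k < d) x 0 (tnth (nbr v) k).

Definition tanner n m d (nbr : 'I_m -> d.-tuple 'I_n) (C0 : {set word d})
  : {set word n} := [set x | [forall v, loc nbr x v \in C0]].

Definition lexlt d (u v : word d) : bool :=
  [exists k : 'I_d, [forall j : 'I_d, (j < k)%N ==> (u 0 j == v 0 j)]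
                    && (u 0 k == 0) && (v 0 k == 1)].

Definition Decode d (C0 : {set word d}) (z : word d) : word d :=
  odflt 0 [pick w in C0 | [forall w' in C0,
     (dH z w < dH z w')%N ||
     ((dH z w == dH z w') && ((w == w') || lexlt w w'))]].

(* the vector p computed by DeterFlip(x, q) (it does not depend on q);
   t is a real parameter. *)
Definition diffN n m d (nbr : 'I_m -> d.-tuple 'I_n) (C0 : {set word d})
  (x : word n) (v : 'I_m) : {set 'I_n} :=
  [set tnth (nbr v) k | k in [set k : 'I_d |
       Decode C0 (loc nbr x v) 0 k != loc nbr x v 0 k]].

Definition flipval (R : realFieldType) n m c d (nbr : 'I_m -> d.-tuple 'I_n)
  (C0 : {set word d}) (t : R) (x : word n) (i : 'I_n) : R :=
  \sum_(v : 'I_m | [&& (1 <= dH (Decode C0 (loc nbr x v)) (loc nbr x v))%N,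
                       (dH (Decode C0 (loc nbr x v)) (loc nbr x v))%:R < t,
                       i \in diffN nbr C0 x v &
                       [forall j in diffN nbr C0 x v, (i <= j)%N]])
     ((t - (dH (Decode C0 (loc nbr x v)) (loc nbr x v))%:R) / (c%:R * t)).

Definition Pset (R : realFieldType) n m c d (nbr : 'I_m -> d.-tuple 'I_n)
  (C0 : {set word d}) (t : R) (x : word n) (q : R) : {set 'I_n} :=
  [set i | flipval c nbr C0 t x i == q].

Definition inW (R : realFieldType) (c d0 : nat) (q : R) : Prop :=
  exists i : nat, (i <= c * d0)%N /\ q = i%:R / (c * d0)%:R.

(* Main.v *)
Require Import Defs.
From mathcomp Require Import all_boot all_order all_algebra.
From mathcomp Require Import ring lra zify.
Import Order.TTheory GRing.Theory Num.Theory.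
Local Open Scope ring_scope.

Lemma dHC {k} (u v : word k) : dH u v = dH v u.
Proof. by rewrite /dH; apply: eq_card => j; rewrite !inE eq_sym. Qed.

Lemma dH_tri {k} (u v w : word k) : (dH u w <= dH u v + dH v w)%N.
Proof.
rewrite /dH; apply: leq_trans (leq_card_setU _ _).
apply: subset_leq_card; apply/subsetP => j; rewrite !inE.
by apply: contraLR; rewrite negb_or !negbK => /andP[/eqP-> /eqP->].
Qed.

Lemma Decode_in k (C0 : {set word k}) z : 0 \in C0 -> Decode C0 z \in C0.
Proof. by move=> H0; rewrite /Decode; case: pickP => [w /andP[] //|_ /=]. Qed.

Lemma Decode_correct k (C0 : {set word k}) d0 z w :
  min_dist C0 d0 -> w \in C0 -> (2 * dH z w < d0)%N -> Decode C0 z = w.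
Proof.
move=> [_ md] wC lt.
have key : forall w', w' \in C0 -> w' != w -> (dH z w < dH z w')%N.
  move=> w' w'C ne; have := md _ _ w'C wC ne; have := dH_tri w' z w.
  rewrite (dHC w' z); lia.
rewrite /Decode; case: pickP => [u /andP[uC /forall_inP /(_ w wC)] | H] /=.
  case: (eqVneq u w) => // ne; have := key u uC ne.
  by move=> lt2 /orP[h|/andP[/eqP h _]]; lia.
exfalso; move: (H w); rewrite wC /= => /negP; apply; apply/forall_inP => w' w'C.
case: (eqVneq w' w) => [->|ne]; first by rewrite !eqxx orbT.
by rewrite key.
Qed.

Lemma ltt_nat (R : realFieldType) (k d0 : nat) :
  ((k%:R : R) < d0%:R / 2) = (2 * k < d0)%N.
Proof. by rewrite ltr_pdivlMr ?ltr0n // -natrM ltr_nat mulnC. Qed.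
Lemma dH_ev n m d (nbr : 'I_m -> d.-tuple 'I_n) x y v :
  dH (loc nbr y v) (loc nbr x v) = count (mem (Fdiff x y)) (nbr v).
Proof.
rewrite /dH cardE /enum_mem size_filter -[in RHS](map_tnth_enum (nbr v)) count_map /enum_mem count_filter.
by apply: eq_count => j; rewrite /= !inE !mxE eq_sym andbT.
Qed.
Lemma sum_ev n m c d (nbr : 'I_m -> d.-tuple 'I_n) (F : {set 'I_n}) :
  biregular c nbr -> (\sum_v count (mem F) (nbr v) = c * #|F|)%N.
Proof.
move=> [Hu Hc].
have E v : count (mem F) (nbr v) = (\sum_i ((i \in F) && (i \in nbr v)))%N.
  rewrite -(size_filter (fun i => i \in F)) -(card_uniqP _) ?filter_uniq //.
  rewrite -sum1_card big_mkcond /=; apply: eq_bigr => i _.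
  by move: (mem_filter (fun i0 => i0 \in F) i (nbr v)) => /= ->; case: (_ && _).
under eq_bigr do rewrite E.
rewrite exchange_big /= (bigID (fun i => i \in F)) /= [X in (_ + X)%N]big1; last first.
  by move=> i /negbTE Hi; apply: big1 => v _; rewrite Hi.
rewrite addn0 mulnC -sum_nat_const; apply: eq_bigr => i Hi.
rewrite -(Hc i) -sum1_card [RHS]big_mkcond /=; apply: eq_bigr => v _.
by rewrite Hi inE.
Qed.
Section Main.
Variables (R : realFieldType) (n m c d d0 : nat) (alpha delta : R)
  (nbr : 'I_m -> d.-tuple 'I_n) (C0 : {set word d}) (x y : word n).
Hypotheses (c_gt0 : (0 < c)%N) (Hexp : bip_expander c alpha delta nbr)
  (Hlin : linear_code C0) (Hmd : min_dist C0 d0) (Hd0 : 2 < d0%:R * delta)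
  (Hy : y \in tanner nbr C0) (HF : (dH x y)%:R <= alpha * n%:R).

Local Notation th := (d0%:R / 2 : R).
Local Notation F := (Fdiff x y).
Local Notation kv v := (dH (Decode C0 (loc nbr x v)) (loc nbr x v)).
Local Notation D v := (diffN nbr C0 x v).

Definition ev v := count (mem F) (nbr v).
Definition act v := (1 <= kv v)%N && ((kv v)%:R < th).
Definition mn v i := (i \in D v) && [forall j in D v, (i <= j)%N].
Definition vv v : R := (th - (kv v)%:R) / (c%:R * th).
Definition p i := flipval c nbr C0 th x i.
Definition sg i : R := if i \in F then 1 else -1.
Definition gv v : R :=
  ((if (0 < ev v)%N then th else 0) - (ev v)%:R) / (c%:R * th).
Definition contrib v : R := \sum_i (if act v && mn v i then sg i * vv v else 0).

Lemma delta_gt0 : 0 < delta.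
Proof. by case: Hexp => _ [_ [/andP[]]]. Qed.

Lemma d0_gt0 : (0 < d0)%N.
Proof.
rewrite lt0n; apply/negP => /eqP E; move: Hd0; rewrite E mul0r; lra.
Qed.

Lemma c_neq0 : (c%:R : R) != 0. Proof. by rewrite pnatr_eq0 -lt0n. Qed.
Lemma d0_neq0 : (d0%:R : R) != 0. Proof. by rewrite pnatr_eq0 -lt0n d0_gt0. Qed.
Lemma th_gt0 : 0 < th. Proof. by rewrite divr_gt0 ?ltr0n ?d0_gt0. Qed.
Lemma cth_gt0 : 0 < c%:R * th. Proof. by rewrite mulr_gt0 ?ltr0n ?th_gt0. Qed.

Lemma yl_in v : loc nbr y v \in C0.
Proof. by move: Hy; rewrite inE => /forallP. Qed.

Lemma pE i : p i = \sum_(v | act v && mn v i) vv v.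
Proof. by rewrite /p /flipval; apply: eq_bigl => v; rewrite /act /mn !andbA. Qed.


Lemma ev_eq v : dH (loc nbr y v) (loc nbr x v) = ev v.
Proof. exact: dH_ev. Qed.

Lemma minP v : D v != set0 -> exists i0, i0 \in D v /\ forall i, mn v i = (i == i0).
Proof.
case/set0Pn => i1 i1D.
case: (arg_minnP (fun i : 'I_n => nat_of_ord i) i1D) => i0 i0D min0.
have i0D3 : i0 \in D v := i0D. exists i0; split => // i; rewrite /mn; apply/idP/eqP => [/andP[iD /forall_inP mi]|->].
  by apply: ord_inj; apply/eqP; rewrite eqn_leq mi //= min0.
have i0D2 : i0 \in D v := i0D. by rewrite i0D2 /=; apply/forall_inP => j jD; exact: min0.
Qed.

Lemma D_nonempty v : (1 <= kv v)%N -> D v != set0.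
Proof.
rewrite /dH card_gt0 => /set0Pn [j]; rewrite inE => hj.
apply/set0Pn; exists (tnth (nbr v) j); rewrite /diffN; apply/imsetP; exists j => //.
by rewrite inE.
Qed.

Lemma D_sub v i : Decode C0 (loc nbr x v) = loc nbr y v -> i \in D v -> i \in F.
Proof. by move=> E /imsetP [j]; rewrite inE E !mxE => hj ->; rewrite inE eq_sym. Qed.

Lemma contrib_ge v : gv v <= contrib v.
Proof.
have cth := cth_gt0.
rewrite /contrib.
case Ha: (act v); last first.
  rewrite big1 //.
  rewrite /gv; case: (posnP (ev v)) => [->|ev_pos]; first by rewrite subrr mul0r.
  have : ~~ (2 * ev v < d0)%N.
    apply/negP => lt.
    have dec : Decode C0 (loc nbr x v) = loc nbr y v.
      by apply: Decode_correct Hmd (yl_in v) _; rewrite dHC ev_eq.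
    by move: Ha; rewrite /act dec ev_eq ev_pos ltt_nat lt.
  rewrite -leqNgt => le.
  rewrite ler_pdivrMr // mul0r.
  have : (d0%:R : R) <= 2 * (ev v)%:R by rewrite -natrM ler_nat.
  lra.
rewrite (eq_bigr (fun i => if mn v i then sg i * vv v else 0)); last by move=> i _.
rewrite -big_mkcond.
move: Ha; rewrite /act => /andP[k1 kt].
have [i0 [i0D Hmin]] := @minP v (@D_nonempty v k1).
rewrite (big_pred1 i0) //=.
have vv_ge0 : 0 <= vv v.
  by rewrite /vv divr_ge0 ?(ltW cth) // subr_ge0 ltW.
case: (eqVneq (Decode C0 (loc nbr x v)) (loc nbr y v)) => [dec|ndec].
  have i0F := @D_sub v i0 dec i0D.
  have ke : kv v = ev v by rewrite dec ev_eq.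
  have evp : (0 < ev v)%N by rewrite -ke.
  by rewrite /sg i0F mul1r /gv evp /vv ke.
have t2 := (proj2 Hmd) _ _ (@Decode_in _ C0 (loc nbr x v) (proj1 Hlin)) (yl_in v) ndec.
have t1 := dH_tri (Decode C0 (loc nbr x v)) (loc nbr x v) (loc nbr y v).
rewrite [dH (loc nbr x v) _]dHC ev_eq in t1.
have sum : (d0 <= kv v + ev v)%N by apply: leq_trans t2 t1.
have : - vv v <= sg i0 * vv v.
  by rewrite /sg; case: (i0 \in F); rewrite ?mul1r ?mulN1r; lra.
apply: le_trans.
rewrite /gv /vv; case: posnP => [e0|epos].
  exfalso; move: sum; rewrite e0 addn0 => s; move: kt; rewrite ltt_nat; lia.
rewrite -mulNr; apply: ler_wpM2r; first by rewrite invr_ge0 ltW.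
have : (d0%:R : R) <= (kv v)%:R + (ev v)%:R by rewrite -natrD ler_nat.
lra.
Qed.

Lemma X_eq : \sum_i sg i * p i = \sum_v contrib v.
Proof.
rewrite /contrib [RHS]exchange_big /=; apply: eq_bigr => i _.
rewrite pE big_distrr /= big_mkcond /=; apply: eq_bigr => v _.
by case: (_ && _); rewrite ?mulr0.
Qed.

Lemma sum_gv : \sum_v gv v = (th * #|Nbh nbr F|%:R - (c * #|F|)%:R) / (c%:R * th).
Proof.
rewrite /gv -mulr_suml sumrB -(@sum_ev _ _ _ _ nbr F (proj1 Hexp)) natr_sum; congr ((_ - _) / _).
rewrite -big_mkcond /= (eq_bigl (fun v => v \in Nbh nbr F)) ?sumr_const ?mulr_natr //.
by move=> v; rewrite inE has_count.
Qed.

Definition B : R := (d0%:R / 2 - delta^-1) * delta / (2 * c%:R * th ^+ 2) * #|F|%:R.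

Lemma X_ge : ((c * d0)%:R : R) * B <= \sum_i sg i * p i.
Proof.
rewrite X_eq; apply: le_trans (ler_sum _ (fun v _ => contrib_ge v)).
rewrite sum_gv.
have NF : delta * c%:R * #|F|%:R <= #|Nbh nbr F|%:R.
  by apply: (proj2 (proj2 (proj2 Hexp))).
have E : (th * #|Nbh nbr F|%:R - (c * #|F|)%:R) / (c%:R * th) - (c * d0)%:R * B
   = (#|Nbh nbr F|%:R - delta * c%:R * #|F|%:R) / c%:R.
  rewrite /B !natrM; field.
  by rewrite c_neq0 d0_neq0 (gt_eqF delta_gt0).
by rewrite -subr_ge0 E divr_ge0 ?subr_ge0 // ler0n.
Qed.

Definition Jn i : nat := (\sum_(v | act v && mn v i) (d0 - 2 * kv v))%N.

Lemma p_W i : p i = (Jn i)%:R / (c * d0)%:R /\ (Jn i <= c * d0)%N.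
Proof.
split.
  rewrite pE /Jn natr_sum mulr_suml; apply: eq_bigr => v /andP[/andP[k1 kt] _].
  move: (kt); rewrite ltt_nat => kt'.
  rewrite /vv natrB ?natrM; last lia.
  by field; rewrite c_neq0 d0_neq0.
apply: (@leq_trans (\sum_(v in [set v | i \in nbr v]) d0)%N).
  rewrite /Jn big_mkcond [X in (_ <= X)%N]big_mkcond /=; apply: leq_sum => v _.
  case: ifP => [/andP[_ /andP[iD _]]|_ ] //.
  rewrite inE ifT ?leq_subr //.
  by move: iD => /imsetP [j _ ->]; exact: mem_tnth.
by rewrite sum_nat_const (proj2 (proj1 Hexp)).
Qed.

Lemma card_a q : #|Pset c nbr C0 th x q :&: F|%:R - #|Pset c nbr C0 th x q :\: F|%:R
   = \sum_i (if p i == q then sg i else 0) :> R.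
Proof.
rewrite -!sumr_const big_mkcond [X in _ - X]big_mkcond -sumrB /=.
apply: eq_bigr => i _.
rewrite in_setI in_setD.
have -> : (i \in Pset c nbr C0 th x q) = (p i == q) by rewrite inE. rewrite /sg.
by case: (p i == q); case: (i \in F); rewrite /= ?subr0 ?sub0r.
Qed.

Lemma mainlem : exists q : R, [/\ inW c d0 q, q != 0 &
    #|Pset c nbr C0 th x q :&: F|%:R - #|Pset c nbr C0 th x q :\: F|%:R >= B].
Proof.
set N := (c * d0)%N.
have N_gt0 : (0 < N)%N by rewrite muln_gt0 c_gt0 d0_gt0.
have N_neq0 : (N%:R : R) != 0 by rewrite pnatr_eq0 -lt0n.
pose qq (j : 'I_N.+1) : R := j%:R / N%:R.
pose a (j : 'I_N.+1) : R := \sum_i (if p i == qq j then sg i else 0).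
have B_ge0 : 0 <= B.
  rewrite /B; apply: mulr_ge0 (ler0n _ _); apply: divr_ge0; last first.
    apply: ltW; apply: mulr_gt0; [apply: mulr_gt0; by rewrite ltr0n | apply: exprn_gt0; exact: th_gt0].
  have dp := delta_gt0.
  rewrite mulrBl mulVf ?(gt_eqF dp) // mulrAC.
  move: Hd0; move: (d0%:R * delta) => u hu; lra.
have Xeq : \sum_i sg i * p i = \sum_(j < N.+1) qq j * a j.
  rewrite /a; under [RHS]eq_bigr do rewrite big_distrr /=.
  rewrite [RHS]exchange_big /=; apply: eq_bigr => i _.
  have [pe Jle] := p_W i.
  pose j0 : 'I_N.+1 := Ordinal (n:=N.+1) (m:=Jn i) Jle.
  rewrite (eq_bigr (fun j => if p i == qq j then qq j * sg i else 0)); last first.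
    by move=> j _; case: ifP; rewrite ?mulr0.
  rewrite -big_mkcond (big_pred1 j0) /=.
    by rewrite mulrC pe.
  move=> j; rewrite /= pe /qq; apply/eqP/eqP => [h|->] //.
  apply: ord_inj => /=.
  move: (congr1 (fun r => r * N%:R) h); rewrite /= !mulfVK // => /eqP.
  by rewrite eqr_nat => /eqP ->.
case: (boolP [exists j : 'I_N.+1, (0 < j)%N && (B <= a j)]).
  case/existsP => j /andP[jp Hj].
  exists (qq j); split.
  - by exists j; split; [rewrite -ltnS ltn_ord | by []].
  - by rewrite /qq mulf_neq0 ?invr_eq0 // pnatr_eq0 -lt0n.
  - by rewrite card_a.
rewrite negb_exists => /forallP Hall.
exfalso.
have Hlt (j : 'I_N.+1) : (0 < j)%N -> a j < B.
  by move=> jp; move: (Hall j); rewrite jp /= -ltNge.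
have := X_ge; rewrite Xeq big_ord_recr /=.
have q_max : qq ord_max = 1 by rewrite /qq divff.
rewrite q_max mul1r.
have Hsum : \sum_(j < N) qq (widen_ord (leqnSn N) j) * a (widen_ord (leqnSn N) j)
   <= (N%:R - 1) * B.
  apply: (@le_trans _ _ (\sum_(j < N) qq (widen_ord (leqnSn N) j) * B)).
    apply: ler_sum => j _; case: (posnP j) => [j0|jp].
      by rewrite /qq /= j0 !mul0r.
    apply: ler_wpM2l; first by rewrite /qq divr_ge0 ?ler0n.
    by apply: ltW; apply: Hlt.
  rewrite -mulr_suml; apply: ler_wpM2r => //.
  apply: (@le_trans _ _ (\sum_(j < N) (N%:R - 1) / N%:R)).
    apply: ler_sum => j _; rewrite /qq ler_pM2r ?invr_gt0 ?ltr0n //.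
    have : (((j : nat).+1)%:R : R) <= N%:R by rewrite ler_nat ltn_ord.
    rewrite -addn1 natrD /=; lra.
  by rewrite sumr_const card_ord -(mulr_natr ((N%:R - 1) / N%:R)) divfK.
have HaN : a ord_max < B by apply: Hlt.
rewrite mulrBl mul1r in Hsum.
rewrite -/N; move: Hsum HaN; move: (N%:R * B) => NB; lra.
Qed.

End Main.

Theorem lemma4p1 (R : realFieldType) (n m c d d0 : nat) (alpha delta : R)
    (nbr : 'I_m -> d.-tuple 'I_n) (C0 : {set word d}) (x y : word n) :
  (0 < c)%N ->
  bip_expander c alpha delta nbr ->
  linear_code C0 ->
  min_dist C0 d0 ->
  2 < d0%:R * delta ->
  y \in tanner nbr C0 ->
  (dH x y)%:R <= alpha * n%:R ->
  let eps0 : R := d0%:R / 2 - delta^-1 in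
  let t : R := d0%:R / 2 in
  let F := Fdiff x y in
  exists q : R, [/\ inW c d0 q, q != 0 &
    #|Pset c nbr C0 t x q :&: F|%:R - #|Pset c nbr C0 t x q :\: F|%:R
      >= eps0 * delta / (2 * c%:R * t ^+ 2) * #|F|%:R].
Proof.
move=> H1 H2 H3 H4 H5 H6 H7 eps0 t F.
exact: (@mainlem R n m c d d0 alpha delta nbr C0 x y H1 H2 H3 H4 H5 H6 H7).
Qed.
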